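(* Let $n,m$ be positive integers and $s$ a real number with $0\le s\le n$. Define $$g(\alpha)=\sum_{i=1}^n\Big(2i\alpha_i+m\big(\alpha_i+1-\tfrac{s}{n}\big)^+\Big)$$ on the polytope $\mathcal{P}=\{\alpha\in\mathbb{R}^n:\ \tfrac{s}{n}\ge\alpha_1\ge\alpha_2\ge\cdots\ge\alpha_n,\ \sum_{i=1}^n\alpha_i=0\}$. If $m\ge 2(\lceil s\rceil-1)$, then $$\min_{\alpha\in\mathcal{P}}g(\alpha)=d^*(s):=-(m+n-2\lfloor s\rfloor-1)s+mn-\lfloor s\rfloor(\lfloor s\rfloor+1).$$
   Context: $(x)^+=\max(0,x)$. The function $d^*$ takes the value $(n-s)(m-s)$ at integers $s$ and is linear in between. *)

(* Defs.v *)
From Stdlib Require Import Reals Lra Lia ZArith Arith.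
Open Scope R_scope.

Definition posp (x : R) : R := Rmax 0 x.

(* floor and ceiling of a real number. Int_part x = up x - 1 is the floor. *)
Definition Rfloor (x : R) : R := IZR (Int_part x).
Definition Rceil (x : R) : R := - Rfloor (- x).

(* sum_{i=1}^n f i  (for n >= 1) *)
Definition sum1n (n : nat) (f : nat -> R) : R :=
  sum_f_R0 (fun k => f (S k)) (pred n).

(* vectors alpha in R^n are modelled as alpha : nat -> R, using alpha 1..alpha n *)
Definition polytopeP (n : nat) (s : R) (alpha : nat -> R) : Prop :=
  s / INR n >= alpha 1%nat /\
  (forall i : nat, (1 <= i < n)%nat -> alpha i >= alpha (S i)) /\
  sum1n n alpha = 0.

Definition gfun (n m : nat) (s : R) (alpha : nat -> R) : R :=
  sum1n n (fun i => 2 * INR i * alpha i + INR m * posp (alpha i + 1 - s / INR n)).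

Definition dstar (n m : nat) (s : R) : R :=
  - (INR m + INR n - 2 * Rfloor s - 1) * s + INR m * INR n
  - Rfloor s * (Rfloor s + 1).

(* Main.v *)
Require Import Defs.
From Stdlib Require Import Reals Lra Lia ZArith Arith.
Open Scope R_scope.

Fixpoint ssum (N : nat) (f : nat -> R) : R :=
  match N with O => 0 | S N' => ssum N' f + f (S N') end.

Lemma sum1n_ssum n f : (0 < n)%nat -> sum1n n f = ssum n f.
Proof.
  intros H. destruct n as [|n]; [lia|]. unfold sum1n. simpl pred.
  induction n as [|n IH]; simpl; [ring|].
  simpl in IH. rewrite IH by lia. reflexivity.
Qed.

Lemma ssum_ext N f g : (forall i, (1 <= i <= N)%nat -> f i = g i) -> ssum N f = ssum N g.
Proof.
  induction N; intros H; simpl; auto.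
  rewrite IHN by (intros; apply H; lia). rewrite H by lia. reflexivity.
Qed.

Lemma ssum_le N f g : (forall i, (1 <= i <= N)%nat -> f i >= g i) -> ssum N f >= ssum N g.
Proof.
  induction N; intros H; simpl; [lra|].
  assert (ssum N f >= ssum N g) by (apply IHN; intros; apply H; lia).
  assert (f (S N) >= g (S N)) by (apply H; lia). lra.
Qed.

Lemma ssum_lin N a f g : ssum N (fun i => a * f i + g i) = a * ssum N f + ssum N g.
Proof. induction N; simpl; [ring|]. rewrite IHN. ring. Qed.

Lemma ssum_split p K f : ssum (p + K) f = ssum p f + ssum K (fun r => f (p + r)%nat).
Proof.
  induction K; simpl.
  - rewrite Nat.add_0_r. ring.
  - rewrite <- plus_n_Sm. simpl. rewrite IHK. ring.
Qed.

Lemma ssum_cf1 N P t c :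
  ssum N (fun i => -2 * (P - INR i) * t + c) = -2 * t * (INR N * P - INR N * (INR N + 1) / 2) + INR N * c.
Proof. induction N; cbn [ssum]; [simpl INR; unfold Rdiv; ring|]. rewrite IHN, S_INR. field. Qed.

Lemma ssum_cf2 N c u :
  ssum N (fun r => (c - 2 * INR r) * u) = (INR N * c - INR N * (INR N + 1)) * u.
Proof. induction N; cbn [ssum]; [simpl; ring|]. rewrite IHN, S_INR. ring. Qed.

Lemma ssum_const N c : ssum N (fun _ => c) = INR N * c.
Proof. induction N; cbn [ssum]; [simpl; ring|]. rewrite IHN, S_INR. ring. Qed.

Lemma posp_ge0 x : posp x >= 0.
Proof. unfold posp, Rmax. destruct Rle_dec; lra. Qed.
Lemma posp_gex x : posp x >= x.
Proof. unfold posp, Rmax. destruct Rle_dec; lra. Qed.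
Lemma posp_pos x : 0 <= x -> posp x = x.
Proof. unfold posp, Rmax. destruct Rle_dec; lra. Qed.
Lemma posp_neg x : x <= 0 -> posp x = 0.
Proof. unfold posp, Rmax. destruct Rle_dec; lra. Qed.

Lemma chooseK n m s : (0 < n)%nat -> 0 <= s -> s <= INR n -> INR m >= 2 * (Rceil s - 1) ->
  exists K, (K + 1 <= n)%nat /\ INR K <= s <= INR K + 1 /\ 2 * INR K <= INR m /\
    (Rfloor s = INR K \/ (s = INR K + 1 /\ Rfloor s = INR K + 1)).
Proof.
  intros hn hs0 hsn hm.
  destruct (base_Int_part s) as [F1 F2].
  destruct (base_Int_part (-s)) as [G1 G2].
  unfold Rceil, Rfloor in *.
  set (F := Int_part s) in *. set (G := Int_part (-s)) in *.
  assert (HF0 : (0 <= F)%Z) by (assert (IZR (-1) < IZR F) by lra; apply lt_IZR in H; lia).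
  assert (Hn : INR n = IZR (Z.of_nat n)) by apply INR_IZR_INZ.
  destruct (Req_dec (IZR F) s) as [Heq|Hne].
  - assert (HG : (G <= - F)%Z) by (apply le_IZR; rewrite opp_IZR; lra).
    assert (HG' : IZR G <= - IZR F) by (rewrite <- opp_IZR; apply IZR_le; lia).
    destruct (Z.eq_dec F 0) as [F0|F0].
    + exists 0%nat. simpl. rewrite F0 in *. split; [lia|]. split; [lra|]. split; [pose proof (pos_INR m); lra|].
      left. reflexivity.
    + exists (Z.to_nat (F - 1)).
      assert (HK : INR (Z.to_nat (F - 1)) = IZR F - 1).
      { rewrite INR_IZR_INZ, Z2Nat.id by lia. rewrite minus_IZR. reflexivity. }
      rewrite HK. split.
      * assert (F <= Z.of_nat n)%Z by (apply le_IZR; lra). lia.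
      * split; [lra|]. split; [lra|]. right. split; lra.
  - assert (HFs : IZR F < s) by lra.
    assert (HG : (G < - F)%Z) by (apply lt_IZR; rewrite opp_IZR; lra).
    assert (HG' : IZR G <= - IZR F - 1) by (rewrite <- opp_IZR, <- minus_IZR; apply IZR_le; lia).
    exists (Z.to_nat F).
    assert (HK : INR (Z.to_nat F) = IZR F) by (rewrite INR_IZR_INZ, Z2Nat.id by lia; reflexivity).
    rewrite HK. split.
    * assert (F < Z.of_nat n)%Z by (apply lt_IZR; lra). lia.
    * split; [lra|]. split; [lra|]. left. reflexivity.
Qed.

Section Core.
Variables (p K m : nat) (s : R).
Hypotheses (hp : (1 <= p)%nat) (hK1 : INR K <= s) (hK2 : s <= INR K + 1)
  (hmK : 2 * INR K <= INR m)
  (hfl : Rfloor s = INR K \/ (s = INR K + 1 /\ Rfloor s = INR K + 1)).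

Let n := (p + K)%nat.
Let t := s / INR n.
Let f := s - INR K.

Lemma INRn_pos : 0 < INR n.
Proof. apply lt_0_INR. unfold n. lia. Qed.

Lemma s_eq : s = t * (INR p + INR K).
Proof. unfold t. rewrite <- plus_INR. fold n. field. apply Rgt_not_eq, INRn_pos. Qed.

Definition E (i : nat) : R :=
  if (i <=? p)%nat then -2 * (INR p - INR i) * t + INR m * (1 - t)
  else (INR m - 2 * (INR i - INR p)) * (1 - t).

Lemma sumE : ssum n E = dstar n m s.
Proof.
  unfold n. rewrite ssum_split.
  rewrite (ssum_ext p E (fun i => -2 * (INR p - INR i) * t + INR m * (1 - t))).
  2:{ intros i Hi. unfold E. destruct (Nat.leb_spec i p); [reflexivity|lia]. }
  rewrite (ssum_ext K (fun r => E (p + r)%nat) (fun r => (INR m - 2 * INR r) * (1 - t))).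
  2:{ intros i Hi. unfold E. destruct (Nat.leb_spec (p + i) p); [lia|]. rewrite plus_INR. ring. }
  rewrite ssum_cf1, ssum_cf2.
  unfold dstar. rewrite plus_INR.
  assert (Hs := s_eq).
  assert (Hgen : -2 * t * (INR p * INR p - INR p * (INR p + 1) / 2) + INR p * (INR m * (1 - t)) +
     (INR K * INR m - INR K * (INR K + 1)) * (1 - t) =
     - (INR m + (INR p + INR K) - 2 * INR K - 1) * s + INR m * (INR p + INR K) - INR K * (INR K + 1)).
  { rewrite Hs. field. }
  rewrite Hgen.
  destruct hfl as [H|[H1 H2]]; rewrite ?H, ?H2; [reflexivity|].
  rewrite H1. ring.
Qed.


Definition term (a : nat -> R) (i : nat) : R :=
  2 * INR i * a i + INR m * posp (a i + 1 - s / INR n).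

Lemma gfun_ssum a : gfun n m s a = ssum n (term a).
Proof. unfold gfun. apply sum1n_ssum. unfold n; lia. Qed.

Lemma term_lb a i : (1 <= i <= n)%nat -> a i <= t ->
  term a i >= (INR m + 2 * INR p) * a i + E i.
Proof.
  intros Hi Ha. unfold term, E. fold t.
  pose proof (posp_ge0 (a i + 1 - t)). pose proof (posp_gex (a i + 1 - t)).
  pose proof (pos_INR m).
  destruct (Nat.leb_spec i p) as [Hle|Hgt].
  - apply le_INR in Hle.
    assert (0 <= (INR p - INR i) * (t - a i)) by (apply Rmult_le_pos; lra).
    assert (INR m * posp (a i + 1 - t) >= INR m * (a i + 1 - t)) by (apply Rle_ge, Rmult_le_compat_l; lra).
    lra.
  - assert (Hin : INR i <= INR p + INR K) by (rewrite <- plus_INR; apply le_INR; unfold n in Hi; lia).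
    assert (INR p < INR i) by (apply lt_INR; lia).
    set (x := a i + 1 - t) in *.
    set (c := INR m - 2 * (INR i - INR p)).
    assert (Hc0 : 0 <= c) by (unfold c; lra).
    assert (Hc1 : c <= INR m) by (unfold c; lra).
    assert (INR m * posp x >= c * x).
    { destruct (Rle_dec 0 x).
      - rewrite posp_pos by lra.
        assert (0 <= (INR m - c) * x) by (apply Rmult_le_pos; lra). lra.
      - rewrite posp_neg by lra.
        assert (0 <= c * (- x)) by (apply Rmult_le_pos; lra). lra. }
    unfold x in *. unfold c in *. lra.
Qed.

Lemma le_t a : polytopeP n s a -> forall i, (1 <= i <= n)%nat -> a i <= t.
Proof.
  intros [H1 [H2 H3]] i Hi. induction i as [|i IH]; [lia|].
  destruct i as [|i]. - unfold t; lra.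
  - assert (a (S i) >= a (S (S i))) by (apply H2; lia).
    assert (a (S i) <= t) by (apply IH; lia). lra.
Qed.

Lemma lower a : polytopeP n s a -> gfun n m s a >= dstar n m s.
Proof.
  intros Hp. rewrite gfun_ssum, <- sumE.
  assert (Hge : ssum n (term a) >= ssum n (fun i => (INR m + 2 * INR p) * a i + E i)).
  { apply ssum_le. intros i Hi. apply term_lb; auto. apply (le_t a Hp); auto. }
  rewrite ssum_lin in Hge.
  destruct Hp as [_ [_ H3]]. rewrite sum1n_ssum in H3 by (unfold n; lia).
  rewrite H3 in Hge. lra.
Qed.

Definition astar (i : nat) : R :=
  if (i <? p)%nat then t else if (i =? p)%nat then t - f else t - 1.

Lemma astar_le i : astar i <= t.
Proof. unfold astar, f. destruct (i <? p)%nat; [lra|]. destruct (i =? p)%nat; lra. Qed.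

Lemma astar_sum : ssum n astar = 0.
Proof.
  unfold n. rewrite ssum_split.
  set (q := (p - 1)%nat).
  assert (Eq : p = S q) by (unfold q; lia).
  replace (ssum p astar) with (ssum (S q) astar) by (rewrite <- Eq; reflexivity).
  cbn [ssum].
  rewrite (ssum_ext q astar (fun _ => t)).
  2:{ intros i Hi. unfold astar. destruct (Nat.ltb_spec i p); [reflexivity|lia]. }
  rewrite (ssum_ext K (fun r => astar (p + r)%nat) (fun _ => t - 1)).
  2:{ intros i Hi. unfold astar. destruct (Nat.ltb_spec (p + i) p); [lia|].
      destruct (Nat.eqb_spec (p + i) p); [lia|reflexivity]. }
  rewrite !ssum_const.
  unfold astar. rewrite <- Eq, Nat.ltb_irrefl, Nat.eqb_refl.
  pose proof s_eq as Hs. rewrite Eq, S_INR in Hs. unfold f. lra.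
Qed.

Lemma astar_poly : polytopeP n s astar.
Proof.
  split; [|split].
  - pose proof (astar_le 1). unfold t in H. lra.
  - intros i Hi. unfold astar, f.
    destruct (Nat.ltb_spec i p), (Nat.eqb_spec i p), (Nat.ltb_spec (S i) p), (Nat.eqb_spec (S i) p);
      try lia; lra.
  - rewrite sum1n_ssum by (unfold n; lia). apply astar_sum.
Qed.

Lemma term_astar i : (1 <= i <= n)%nat -> term astar i = (INR m + 2 * INR p) * astar i + E i.
Proof.
  intros Hi. unfold term, E, astar. fold t. unfold f.
  destruct (Nat.ltb_spec i p); [|destruct (Nat.eqb_spec i p)].
  - destruct (Nat.leb_spec i p); [|lia].
    rewrite posp_pos by lra. ring.
  - subst i. rewrite Nat.leb_refl. rewrite posp_pos by lra. ring.
  - destruct (Nat.leb_spec i p); [lia|].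
    rewrite posp_neg by lra. ring.
Qed.

Lemma exist_part : exists a, polytopeP n s a /\ gfun n m s a = dstar n m s.
Proof.
  exists astar. split; [apply astar_poly|].
  rewrite gfun_ssum, <- sumE.
  rewrite (ssum_ext n (term astar) (fun i => (INR m + 2 * INR p) * astar i + E i)) by apply term_astar.
  rewrite ssum_lin, astar_sum. ring.
Qed.

End Core.
Theorem mainTheorem4 (n m : nat) (s : R)
  (hn : (0 < n)%nat) (hm : (0 < m)%nat)
  (hs0 : 0 <= s) (hsn : s <= INR n)
  (hms : INR m >= 2 * (Rceil s - 1)) :
  (exists alpha : nat -> R, polytopeP n s alpha /\ gfun n m s alpha = dstar n m s) /\
  (forall alpha : nat -> R, polytopeP n s alpha -> gfun n m s alpha >= dstar n m s).
Proof.
  destruct (chooseK n m s hn hs0 hsn hms) as [K [HKn [[HK1 HK2] [HmK Hfl]]]].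
  assert (En : n = ((n - K) + K)%nat) by lia.
  assert (Hp : (1 <= n - K)%nat) by lia.
  rewrite En. split.
  - eapply exist_part; eauto.
  - intros a. eapply lower; eauto.
Qed.
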